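(* Let $T>0$ and $\mathbf{u}\in C([0,T];X)$. Then for every $t\in[0,T]$ the map $(\mathbf{y},\mathbf{x})\mapsto\gamma(\mathbf{u})(\mathbf{y},\mathbf{x},t)$ on $\Omega\times\Omega$ is measurable, and for almost all $(\mathbf{y},\mathbf{x})$ the map $t\mapsto\gamma(\mathbf{u})(\mathbf{y},\mathbf{x},t)$ is continuous on $[0,T]$. Moreover, there is a constant $C$, independent of the vector fields, such that for all $\mathbf{u},\mathbf{w}\in C([0,T];X)$, almost all $(\mathbf{y},\mathbf{x})\in\Omega\times\Omega$ with $|\mathbf{y}-\mathbf{x}|<\epsilon$, and all $t\in[0,T]$, $$|\gamma(\mathbf{u})(\mathbf{y},\mathbf{x},t)-\gamma(\mathbf{w})(\mathbf{y},\mathbf{x},t)|\le \|\mathbf{u}-\mathbf{w}\|_{C([0,T];X)}\,\frac{C}{|\mathbf{y}-\mathbf{x}|}.$$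
   Context: Let $d\in\{2,3\}$, $\Omega\subset\mathbb{R}^d$ a bounded domain, $\epsilon>0$ a horizon, $L>0$ a length and $\overline{\mu}>0$. For a time-dependent displacement $\mathbf{u}(t,\cdot):\Omega\to\mathbb{R}^d$ and $\mathbf{y}\ne\mathbf{x}$, with $\mathbf{e}=(\mathbf{y}-\mathbf{x})/|\mathbf{y}-\mathbf{x}|$, the strain is $S(\mathbf{y},\mathbf{x},\mathbf{u}(t))=(\mathbf{u}(t,\mathbf{y})-\mathbf{u}(t,\mathbf{x}))\cdot\mathbf{e}/|\mathbf{y}-\mathbf{x}|$, the memory strain is $S^*(t,\mathbf{y},\mathbf{x},\mathbf{u})=\max_{0\le\tau\le t}S(\mathbf{y},\mathbf{x},\mathbf{u}(\tau))$ and $r^*=\sqrt{|\mathbf{y}-\mathbf{x}|/L}\,S^*(t,\mathbf{y},\mathbf{x},\mathbf{u})$. The failure envelope is the derivative $g'$ of a convex–concave potential $g$ with parameters $0<r^L\le r^C<r^F$: $g'(r)=\overline{\mu}r$ for $r\le r^L$, $g'$ becomes nonlinear beyond $r^L$ (strain hardening between $r^L$ and $r^C$) and decreases to $0$ at $r^F$, with $g'(r)=0$ for $r\ge r^F$ (e.g. the bilinear law $g'(r)=\overline{\mu}r$ for $r<r^C$, $g'(r)=\overline{\mu}r^C\frac{r^F-r}{r^F-r^C}$ for $r^C\le r\le r^F$, $0$ for $r>r^F$). The two-point phase field is $\gamma(\mathbf{u})(\mathbf{y},\mathbf{x},t)=\frac{g'(r^* )}{\overline{\mu}\,r^*}\in[0,1]$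 (equal to $1$ when $r^*\le r^L$). Let $\mathcal{U}=\{\mathbb{Q}\mathbf{x}+\mathbf{c}:\ \mathbb{Q}^T=-\mathbb{Q}\}$ be the rigid motions and $X$ the subspace of $L^\infty(\Omega;\mathbb{R}^d)$ of fields $L^2$-orthogonal to $\mathcal{U}$; $C([0,T];X)$ has norm $\sup_{0\le t\le T}\|\mathbf{u}(t)\|_{L^\infty}$. *)

(* Defs.v *)
From HB Require Import structures.
From mathcomp Require Import all_boot all_order all_algebra.
From mathcomp Require Import all_classical all_reals all_analysis.
Set Implicit Arguments. Unset Strict Implicit. Unset Printing Implicit Defensive.
Import Order.TTheory GRing.Theory Num.Theory.
Import numFieldNormedType.Exports.
Local Open Scope classical_set_scope.
Local Open Scope ring_scope.

Section Defs.
Variable R : realType.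

(* Points of R^n are n-tuples of reals (carrying the Borel product sigma-algebra). *)
Local Notation pt n := (n.-tuple R).

Definition vsub n (a b : pt n) : pt n := [tuple tnth a i - tnth b i | i < n].
Definition vadd n (a b : pt n) : pt n := [tuple tnth a i + tnth b i | i < n].
Definition vscale n (c : R) (a : pt n) : pt n := [tuple c * tnth a i | i < n].
Definition dot n (a b : pt n) : R := \sum_(i < n) tnth a i * tnth b i.
Definition enorm n (a : pt n) : R := Num.sqrt (dot a a).

Definition box n (a b : pt n) : set (pt n) :=
  [set y | forall i : 'I_n, tnth a i <= tnth y i <= tnth b i].
Definition vol n (a b : pt n) : R := \prod_(i < n) Num.max 0 (tnth b i - tnth a i).

Definition leb_outer n (A : set (pt n)) : \bar R :=
  ereal_inf [set (\sum_(k <oo) ((vol (ab.1 k) (ab.2 k))%:E))%E |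
             ab in [set ab : (nat -> pt n) * (nat -> pt n) |
                    A `<=` \bigcup_k box (ab.1 k) (ab.2 k)]].

Definition null n (A : set (pt n)) : Prop := leb_outer A = 0%E.

(* Lebesgue-null subsets of R^d x R^d = R^(2d) *)
Definition null2 n (N : set (pt n * pt n)) : Prop :=
  null ((fun p : pt n * pt n => cat_tuple p.1 p.2) @` N).

Definition ae2 n (A : set (pt n * pt n)) (P : pt n -> pt n -> Prop) : Prop :=
  exists N, null2 N /\ forall y x, A (y, x) -> ~ N (y, x) -> P y x.

(* bounded domain: nonempty, open, connected, bounded (Euclidean topology) *)
Definition eopen n (A : set (pt n)) : Prop :=
  forall x, A x -> exists r : R, 0 < r /\ [set y | enorm (vsub y x) < r] `<=` A.
Definition bounded_domain n (Om : set (pt n)) : Prop :=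
  [/\ Om !=set0, eopen Om,
      (forall A B : set (pt n), eopen A -> eopen B -> Om `<=` A `|` B ->
         Om `&` A `&` B = set0 -> Om `&` A = set0 \/ Om `&` B = set0)
    & exists M : R, forall x, Om x -> enorm x <= M].

Definition linf n (Om : set (pt n)) (f : pt n -> pt n) : \bar R :=
  ereal_inf [set M%:E | M in [set M : R | null (Om `&` [set x | M < enorm (f x)])]].

Definition rigid n (Q : 'M[R]_n) (c : pt n) (x : pt n) : pt n :=
  [tuple (\sum_(j < n) Q i j * tnth x j) + tnth c i | i < n].

(* v belongs to X: measurable, essentially bounded, L^2-orthogonal to rigid motions *)
Definition inX n (Om : set (pt n)) (v : pt n -> pt n) : Prop :=
  [/\ measurable_fun Om v,
      (linf Om v < +oo)%E
    & forall (Q : 'M[R]_n) (c : pt n), Q^T = - Q ->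
        (\int[@leb_outer n]_(x in Om) (dot (v x) (rigid Q c x))%:E = 0)%E].

(* u in C([0,T]; X), u given as a map from times to (representatives of) fields *)
Definition inCX n (Om : set (pt n)) (T : R) (u : R -> pt n -> pt n) : Prop :=
  (forall t, 0 <= t <= T -> inX Om (u t)) /\
  (forall t, 0 <= t <= T -> forall e : R, 0 < e -> exists del : R, 0 < del /\
     forall s, 0 <= s <= T -> `|s - t| < del ->
       (linf Om (fun x => vsub (u s x) (u t x)) <= e%:E)%E).

(* norm of C([0,T];X) applied to u - w *)
Definition normCX n (Om : set (pt n)) (T : R) (u w : R -> pt n -> pt n) : \bar R :=
  ereal_sup [set linf Om (fun x => vsub (u t x) (w t x)) | t in `[0, T]%classic].

Definition strain n (y x : pt n) (v : pt n -> pt n) : R :=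
  dot (vsub (v y) (v x)) (vscale (enorm (vsub y x))^-1 (vsub y x)) / enorm (vsub y x).

(* memory strain S^*(t,y,x,u): maximum over tau in [0,t], it is
   taken over the rational times tau in [0,t] (a countable dense set). *)
Definition mstrain n (u : R -> pt n -> pt n) (t : R) (y x : pt n) : \bar R :=
  ereal_sup [set (strain y x (u (ratr q : R)))%:E |
             q in [set q : rat | 0 <= (ratr q : R) <= t]].

Definition rstar n (Lc : R) (u : R -> pt n -> pt n) (t : R) (y x : pt n) : \bar R :=
  ((Num.sqrt (enorm (vsub y x) / Lc))%:E * mstrain u t y x)%E.

(* failure envelope g' (derivative of the convex-concave potential g) *)
Definition envelope (mu rL rC rF : R) (gp : R -> R) : Prop :=
  (0 < rL /\ rL <= rC /\ rC < rF) /\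
  (forall r, r <= rL -> gp r = mu * r) /\
  (forall r, rF <= r -> gp r = 0) /\
  (forall r, rL <= r -> 0 <= gp r /\ gp r <= mu * r) /\
  (forall r s, r <= s -> s <= rC -> gp r <= gp s) /\
  (forall r s, rC <= r -> r <= s -> gp s <= gp r) /\
  (exists K : R, forall r s, `|gp r - gp s| <= K * `|r - s|).

Definition phase (mu rL : R) (gp : R -> R) (r : \bar R) : R :=
  match r with
  | EFin r => if r <= rL then 1 else gp r / (mu * r)
  | +oo%E => 0
  | -oo%E => 1
  end.

Definition gamma n (Lc mu rL : R) (gp : R -> R) (u : R -> pt n -> pt n)
  (y x : pt n) (t : R) : R := phase mu rL gp (rstar Lc u t y x).

End Defs.
Notation pt R n := (n.-tuple R).

(* Main.v *)
Require Import Defs.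
From HB Require Import structures.
From mathcomp Require Import all_boot all_order all_algebra.
From mathcomp Require Import all_classical all_reals all_analysis.
From mathcomp Require Import ring lra.
From mathcomp Require Import measurable_realfun.
Set Implicit Arguments. Unset Strict Implicit. Unset Printing Implicit Defensive.
Import Order.TTheory GRing.Theory Num.Theory.
Import numFieldNormedType.Exports.
Local Open Scope classical_set_scope.
Local Open Scope ring_scope.

Section Vec.
Variable R : realType.
Local Notation pt n := (n.-tuple R).

Lemma tnth_vsub n (a b : pt n) i : tnth (vsub a b) i = tnth a i - tnth b i.
Proof. by rewrite /vsub tnth_mktuple. Qed.
Lemma tnth_vadd n (a b : pt n) i : tnth (vadd a b) i = tnth a i + tnth b i.
Proof. by rewrite /vadd tnth_mktuple. Qed.
Lemma tnth_vscale n c (a : pt n) i : tnth (vscale c a) i = c * tnth a i.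
Proof. by rewrite /vscale tnth_mktuple. Qed.

Lemma dot_ge0 n (a : pt n) : 0 <= dot a a.
Proof. by rewrite /dot; apply: sumr_ge0 => i _; rewrite -expr2 sqr_ge0. Qed.

Lemma enorm_ge0 n (a : pt n) : 0 <= enorm a.
Proof. exact: sqrtr_ge0. Qed.

Lemma enorm_sq n (a : pt n) : enorm a ^+ 2 = dot a a.
Proof. by rewrite /enorm sqr_sqrtr // dot_ge0. Qed.

Lemma dotC n (a b : pt n) : dot a b = dot b a.
Proof. by rewrite /dot; apply: eq_bigr => i _; rewrite mulrC. Qed.

Lemma dot_vsubl n (a b c : pt n) : dot (vsub a b) c = dot a c - dot b c.
Proof.
rewrite /dot -sumrB; apply: eq_bigr => i _; rewrite tnth_vsub; ring.
Qed.

Lemma dot_vaddl n (a b c : pt n) : dot (vadd a b) c = dot a c + dot b c.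
Proof.
rewrite /dot -big_split; apply: eq_bigr => i _; rewrite tnth_vadd /=; ring.
Qed.

Lemma dot_vscaler n k (a c : pt n) : dot a (vscale k c) = k * dot a c.
Proof.
rewrite /dot mulr_sumr; apply: eq_bigr => i _; rewrite tnth_vscale mulrCA //.
Qed.

Lemma dot_vscalel n k (a c : pt n) : dot (vscale k a) c = k * dot a c.
Proof. by rewrite dotC dot_vscaler dotC. Qed.

Lemma dot0 n (a : pt n) : dot a a = 0 -> forall i, tnth a i = 0.
Proof.
move=> H i; apply/eqP; rewrite -sqrf_eq0 expr2; apply/eqP.
move: H; rewrite /dot => /eqP; rewrite psumr_eq0; last by move=> j _; rewrite -expr2 sqr_ge0.
by move=> /allP /(_ i (mem_index_enum _)) /eqP.
Qed.

Lemma CS n (a b : pt n) : `|dot a b| <= enorm a * enorm b.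
Proof.
suff H : forall a b : pt n, dot a b <= enorm a * enorm b.
  rewrite ler_norml H andbT.
  have := H (vscale (-1) a) b; rewrite dot_vscalel.
  have -> : enorm (vscale (-1) a) = enorm a.
    by rewrite /enorm dot_vscalel dot_vscaler mulNr mul1r mulNr opprK mul1r.
  lra.
move=> {}a {}b.
set A := enorm a; set B := enorm b.
have A0 : 0 <= A by apply: enorm_ge0.
have B0 : 0 <= B by apply: enorm_ge0.
have AA : dot a a = A ^+ 2 by rewrite enorm_sq.
have BB : dot b b = B ^+ 2 by rewrite enorm_sq.
have [Az|Ap] := eqVneq A 0.
  have a0 : forall i, tnth a i = 0.
    by apply: dot0; rewrite AA Az expr2 mul0r.
  rewrite Az mul0r /dot; apply: sumr_le0 => i _; rewrite a0 mul0r.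
  done.
have [Bz|Bp] := eqVneq B 0.
  have b0 : forall i, tnth b i = 0.
    by apply: dot0; rewrite BB Bz expr2 mul0r.
  rewrite Bz mulr0 /dot; apply: sumr_le0 => i _; rewrite b0 mulr0.
  done.
have Ap' : 0 < A by rewrite lt_def Ap A0.
have Bp' : 0 < B by rewrite lt_def Bp B0.
pose z := vsub (vscale B a) (vscale A b).
have := dot_ge0 z.
rewrite /z !dot_vsubl !(dotC _ (vsub _ _)) !dot_vsubl !dot_vscalel !dot_vscaler.
rewrite AA BB (dotC b a) => H.
have : 0 <= 2 * A * B * (A * B - dot a b) by nra.
rewrite pmulr_rge0; first lra.
by rewrite !mulr_gt0.
Qed.

Lemma enorm_vadd n (a b : pt n) : enorm (vadd a b) <= enorm a + enorm b.
Proof.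
rewrite -(@ler_pXn2r _ 2) ?nnegrE ?addr_ge0 ?enorm_ge0 //.
rewrite enorm_sq dot_vaddl !(dotC _ (vadd _ _)) !dot_vaddl.
have := CS a b; rewrite -!enorm_sq (dotC b a).
move: (dot a b) => x; rewrite ler_norml => /andP [_ H]; nra.
Qed.

Lemma enorm_vsubC n (a b : pt n) : enorm (vsub a b) = enorm (vsub b a).
Proof.
rewrite /enorm; congr Num.sqrt; rewrite /dot; apply: eq_bigr => i _.
rewrite !tnth_vsub; ring.
Qed.

Lemma vsub_split n (a b c : pt n) : vsub a c = vadd (vsub a b) (vsub b c).
Proof.
apply: eq_from_tnth => i; rewrite tnth_vadd !tnth_vsub; ring.
Qed.

Lemma enorm_tri n (a b c : pt n) :
  enorm (vsub a c) <= enorm (vsub a b) + enorm (vsub b c).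
Proof. by rewrite (vsub_split a b c) enorm_vadd. Qed.

End Vec.

Section Null.
Variable R : realType.
Local Notation pt n := (n.-tuple R).
Variable n : nat.

Definition covers (A : set (pt n)) (ab : (nat -> pt n) * (nat -> pt n)) :=
  A `<=` \bigcup_k box (ab.1 k) (ab.2 k).

Lemma vol_ge0 (a b : pt n) : 0 <= vol a b.
Proof. by rewrite /vol; apply: prodr_ge0 => i _; rewrite le_max lexx. Qed.

Lemma sumvol_ge0 (ab : (nat -> pt n) * (nat -> pt n)) :
  (0 <= \sum_(k <oo) (vol (ab.1 k) (ab.2 k))%:E)%E.
Proof. by apply: nneseries_ge0 => k _ _; rewrite lee_fin vol_ge0. Qed.

Lemma leb_outer_ge0 (A : set (pt n)) : (0 <= leb_outer A)%E.
Proof.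
by apply/ereal_infP => _ [ab _ <-]; apply: sumvol_ge0.
Qed.

Lemma nullP (A : set (pt n)) : null A <->
  forall e : R, 0 < e -> exists ab, covers A ab /\
    (\sum_(k <oo) (vol (ab.1 k) (ab.2 k))%:E < e%:E)%E.
Proof.
split.
  move=> nA e e0.
  have : (leb_outer A < e%:E)%E by rewrite nA lte_fin.
  by move=> /ereal_inf_lt [_ [ab cov <-] lt]; exists ab.
move=> H; apply/eqP; rewrite eq_le leb_outer_ge0 andbT.
apply/lee_addgt0Pr => e e0; rewrite add0e.
have [ab [cov lt]] := H e e0.
apply: le_trans (ltW lt).
by apply: ereal_inf_lbound; exists ab.
Qed.

Lemma null_sub (A B : set (pt n)) : A `<=` B -> null B -> null A.
Proof.
move=> AB /nullP H; apply/nullP => e e0.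
have [ab [cov lt]] := H e e0; exists ab; split => //.
by move=> y /AB /cov.
Qed.

Lemma vol_flat (a b : pt n) (i : 'I_n) : tnth b i <= tnth a i -> vol a b = 0.
Proof.
move=> ab; rewrite /vol (bigD1 i) //= (_ : Num.max _ _ = 0) ?mul0r //.
by apply/max_idPl; rewrite subr_le0.
Qed.

Lemma null0 : (0 < n)%N -> null (@set0 (pt n)).
Proof.
move=> n0; apply/nullP => e e0; exists (fun=> [tuple 0 | i < n], fun=> [tuple 0 | i < n]).
split; first by [].
rewrite eseries0 ?lte_fin // => k _ _.
by rewrite (@vol_flat _ _ (Ordinal n0)).
Qed.

Lemma geo_half (e : R) :
  (\sum_(k <oo) (e / (2 ^ (k + 2))%:R)%:E)%E = (e / 2)%:E.
Proof.
have := @cvg_geometric_eseries_half R e 1.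
rewrite expr1 => H; exact: (cvg_lim _ H).
Qed.

Lemma null_bigcup (F : nat -> set (pt n)) : (0 < n)%N ->
  (forall k, null (F k)) -> null (\bigcup_k F k).
Proof.
move=> n0 nF; apply/nullP => e e0.
have H k : exists ab, covers (F k) ab /\
    (\sum_(i <oo) (vol (ab.1 i) (ab.2 i))%:E < (e / (2 ^ (k + 2))%:R)%:E)%E.
  by apply: (nullP (F k)).1 (nF k) _ _; rewrite divr_gt0 // ltr0n expn_gt0.
have [ab Hab] := choice H.
pose z := [tuple (0:R) | i < n].
pose g j := match @pickle_inv (nat * nat)%type j with
  | Some p => ((ab p.1).1 p.2, (ab p.1).2 p.2) | None => (z, z) end.
exists (fun j => (g j).1, fun j => (g j).2); split.
  move=> y [k _ /(Hab k).1 [i _ yi]]; exists (pickle (k, i)) => //.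
  by rewrite /= /g pickleK_inv.
pose v k i := (vol ((ab k).1 i) ((ab k).2 i))%:E.
have v0 k i : (0 <= v k i)%E by rewrite lee_fin vol_ge0.
pose G j := (vol (g j).1 (g j).2)%:E.
have G0 j : (0 <= G j)%E by rewrite lee_fin vol_ge0.
have E : (\sum_(j <oo) G j = \sum_(k <oo) \sum_(i <oo) v k i)%E.
  rewrite nneseries_esumT // nneseries_esumT; last first.
    by move=> k; apply: nneseries_ge0 => i _ _; exact: v0.
  transitivity (\esum_(j in [set pickle x | x in [set: nat * nat]]) G j)%E.
    rewrite [RHS]esum_mkcond; apply: eq_esum => j _.
    case: ifPn => // /negP nj.
    rewrite /G /g; case E: (pickle_inv j) => [p|].
      exfalso; apply: nj; rewrite inE; exists p => //.
      by have := @pickle_invK (nat * nat)%type j; rewrite E.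
    by rewrite /= (@vol_flat _ _ (Ordinal n0)) // !tnth_mktuple.
  rewrite esum_image; last by move=> x y _ _; apply: (pcan_inj pickleK_inv).
  transitivity (\esum_(p in [set: nat] `*`` (fun=> [set: nat])) v p.1 p.2)%E.
    rewrite (_ : [set: nat] `*`` _ = [set: nat * nat]); last first.
      by apply/seteqP; split => // -[].
    by apply: eq_esum => p _; rewrite /G /g pickleK_inv.
  rewrite -esum_esum //; apply: eq_esum => k _.
  by rewrite nneseries_esumT.
rewrite E.
apply: (@le_lt_trans _ _ (\sum_(k <oo) (e / (2 ^ (k + 2))%:R)%:E)%E).
  apply: lee_nneseries.
    by move=> k _ _; apply: nneseries_ge0 => i _ _; exact: v0.
  by move=> k _; exact: ltW ((Hab k).2).
by rewrite geo_half lte_fin ltr_pdivrMr // ltr_pMr // ltr1n.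
Qed.

Lemma null_setU (A B : set (pt n)) : (0 < n)%N -> null A -> null B -> null (A `|` B).
Proof.
move=> n0 nA nB.
apply: (@null_sub _ (\bigcup_k (if k is 0%N then A else B))).
  by move=> y [Ay|By]; [exists 0%N | exists 1%N].
by apply: null_bigcup => // -[|k].
Qed.

End Null.

Section Prod.
Variable R : realType.
Local Notation pt n := (n.-tuple R).
Variable n : nat.

Lemma cat_all (P : R -> R -> R -> Prop) (a b c a' b' c' : pt n) :
  (forall i, P (tnth a i) (tnth b i) (tnth c i)) ->
  (forall i, P (tnth a' i) (tnth b' i) (tnth c' i)) ->
  forall i, P (tnth (cat_tuple a a') i) (tnth (cat_tuple b b') i) (tnth (cat_tuple c c') i).
Proof.
move=> H1 H2 i; rewrite -(splitK i); case: (fintype.split i) => j /=.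
  by rewrite !tnth_lshift.
by rewrite !tnth_rshift.
Qed.

Lemma box_cat (a b y a' b' y' : pt n) : box a b y -> box a' b' y' ->
  box (cat_tuple a a') (cat_tuple b b') (cat_tuple y y').
Proof.
move=> H1 H2 i.
exact: (@cat_all (fun a b y => a <= y <= b)).
Qed.

Lemma vol_cat (a b a' b' : pt n) :
  vol (cat_tuple a a') (cat_tuple b b') = vol a b * vol a' b'.
Proof.
rewrite /vol big_split_ord /=; congr (_ * _); apply: eq_bigr => i _.
  by rewrite !tnth_lshift.
by rewrite !tnth_rshift.
Qed.

Lemma scale_lt (V e : R) (S : \bar R) : 0 <= V -> 0 < e -> (0 <= S)%E ->
  (S < (e / (V + 1))%:E)%E -> (V%:E * S < e%:E)%E.
Proof.
move=> V0 e0; case: S => [s| |] //= s0; rewrite !lte_fin lee_fin in s0 * => lt.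
apply: (@le_lt_trans _ _ (V * (e / (V + 1)))).
  by apply: ler_wpM2l => //; apply: ltW.
rewrite mulrA ltr_pdivrMr; [nra | lra].
Qed.

Definition cm (c : R) : pt n := [tuple c | i < n].

Lemma null_catl (N : set (pt n)) (m : R) : null N ->
  null [set z | exists y x, N y /\ box (cm (- m)) (cm m) x /\ z = cat_tuple y x].
Proof.
move=> /nullP nN; apply/nullP => e e0.
set V := vol (cm (- m)) (cm m).
have V0 : 0 <= V by apply: vol_ge0.
have [ab [cov lt]] := nN (e / (V + 1)) (divr_gt0 e0 (ltr_wpDl V0 ltr01)).
exists (fun k => cat_tuple (ab.1 k) (cm (- m)), fun k => cat_tuple (ab.2 k) (cm m)).
split.
  move=> _ [y [x [Ny [bx ->]]]]; have [k _ yk] := cov y Ny.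
  by exists k => //=; apply: box_cat.
rewrite /=.
under eq_eseriesr do rewrite vol_cat EFinM muleC.
rewrite nneseriesZl; last by move=> k _; rewrite lee_fin vol_ge0.
apply: scale_lt => //; exact: sumvol_ge0.
Qed.

Lemma null_catr (N : set (pt n)) (m : R) : null N ->
  null [set z | exists y x, N y /\ box (cm (- m)) (cm m) x /\ z = cat_tuple x y].
Proof.
move=> /nullP nN; apply/nullP => e e0.
set V := vol (cm (- m)) (cm m).
have V0 : 0 <= V by apply: vol_ge0.
have [ab [cov lt]] := nN (e / (V + 1)) (divr_gt0 e0 (ltr_wpDl V0 ltr01)).
exists (fun k => cat_tuple (cm (- m)) (ab.1 k), fun k => cat_tuple (cm m) (ab.2 k)).
split.
  move=> _ [y [x [Ny [bx ->]]]]; have [k _ yk] := cov y Ny.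
  by exists k => //=; apply: box_cat.
rewrite /=.
under eq_eseriesr do rewrite vol_cat EFinM.
rewrite nneseriesZl; last by move=> k _; rewrite lee_fin vol_ge0.
apply: scale_lt => //; exact: sumvol_ge0.
Qed.

Lemma in_some_box (x : pt n) : exists m : nat, box (cm (- m%:R)) (cm m%:R) x.
Proof.
exists (Num.trunc (\sum_j `|tnth x j|)).+1 => i.
rewrite /cm !tnth_mktuple -ler_norml.
have H : `|tnth x i| <= \sum_j `|tnth x j|.
  by rewrite (bigD1 i) //= lerDl sumr_ge0.
apply: (le_trans H); apply: ltW; apply: truncnS_gt.
Qed.

Lemma null2_or (N : set (pt n)) : (0 < n)%N -> null N ->
  null2 [set p : pt n * pt n | N p.1 \/ N p.2].
Proof.
move=> n0 nN; rewrite /null2.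
pose L (m : nat) := [set z | exists y x, N y /\ box (cm (- m%:R)) (cm m%:R) x /\ z = cat_tuple y x].
pose Rr (m : nat) := [set z | exists y x, N y /\ box (cm (- m%:R)) (cm m%:R) x /\ z = cat_tuple x y].
have n20 : (0 < n + n)%N by rewrite addn_gt0 n0.
apply: (@null_sub R (n + n) _ (\bigcup_m (L m `|` Rr m))).
  move=> _ [[y x] /= [Ny|Nx] <-].
    have [m bm] := in_some_box x.
    by exists m => //; left; exists y, x.
  have [m bm] := in_some_box y.
  by exists m => //; right; exists x, y.
apply: null_bigcup => // m; apply: null_setU => //.
  exact: null_catl.
exact: null_catr.
Qed.

End Prod.

Section Linf.
Variable R : realType.
Local Notation pt n := (n.-tuple R).
Variable n : nat.
Variable Om : set (pt n).

Lemma linf_lt_null (f : pt n -> pt n) (r : R) : (linf Om f < r%:E)%E ->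
  null (Om `&` [set x | r < enorm (f x)]).
Proof.
move=> /ereal_inf_lt [_ [M nM <-]]; rewrite lte_fin => Mr.
apply: null_sub nM => x [Ox /= rx]; split => //; exact: lt_trans rx.
Qed.

Lemma linf_ae (f : pt n -> pt n) : (0 < n)%N ->
  null (Om `&` [set x | (linf Om f < (enorm (f x))%:E)%E]).
Proof.
move=> n0; case E: (linf Om f) => [l| |].
- apply: (@null_sub _ _ _ (\bigcup_k (Om `&` [set x | l + k.+1%:R^-1 < enorm (f x)]))).
    move=> x [Ox /=]; rewrite lte_fin => lx.
    exists (Num.trunc ((enorm (f x) - l)^-1)) => //; split => //=.
    rewrite -ltrBrDl -[ltRHS]invrK ltf_pV2 ?posrE ?invr_gt0 ?subr_gt0 //.
    exact: truncnS_gt.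
  apply: null_bigcup => // k; apply: linf_lt_null.
  by rewrite E lte_fin ltrDl invr_gt0.
- by apply: (@null_sub _ _ _ set0) => [x [_ /=]|]; [rewrite ltNge leey | exact: null0].
- apply: (@null_sub _ _ _ (Om `&` [set x | -1 < enorm (f x)])).
    move=> x [Ox _]; split => //=; apply: (@lt_le_trans _ _ 0) => //.
    exact: enorm_ge0.
  by apply: linf_lt_null; rewrite E ltNye.
Qed.

Lemma linf_ge0 (f : pt n -> pt n) : ~ null Om -> (0 <= linf Om f)%E.
Proof.
move=> nOm; apply/ereal_infP => _ [M nM <-]; rewrite lee_fin.
rewrite leNgt; apply/negP => M0; apply: nOm.
apply: null_sub nM => x Ox; split => //=; apply: (lt_le_trans M0).
exact: enorm_ge0.
Qed.

Lemma linf_le (f : pt n -> pt n) (M : R) (N : set (pt n)) : null N ->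
  (forall x, Om x -> ~ N x -> enorm (f x) <= M) -> (linf Om f <= M%:E)%E.
Proof.
move=> nN H; apply: ereal_inf_lbound; exists M => //.
apply: null_sub nN => x [Ox /= Mx]; apply/not_notP => Nx.
by have := H x Ox Nx; rewrite leNgt Mx.
Qed.

Lemma linf_aeP (f : pt n -> pt n) x : Om x ->
  ~ (Om `&` [set x | (linf Om f < (enorm (f x))%:E)%E]) x ->
  ((enorm (f x))%:E <= linf Om f)%E.
Proof.
move=> Ox H; rewrite leNgt; apply/negP => lt; exact: H.
Qed.

Lemma linf_ext (f g : pt n -> pt n) : (forall x, enorm (f x) = enorm (g x)) ->
  linf Om f = linf Om g.
Proof.
move=> H; rewrite /linf.
suff -> : (fun M : R => null (Om `&` [set x | M < enorm (f x)])) =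
  (fun M => null (Om `&` [set x | M < enorm (g x)])) by [].
apply: funext => M.
suff -> : [set x | M < enorm (f x)] = [set x | M < enorm (g x)] by [].
by apply/seteqP; split => x /=; rewrite H.
Qed.

Lemma linf_sym (a b : pt n -> pt n) :
  linf Om (fun x => vsub (a x) (b x)) = linf Om (fun x => vsub (b x) (a x)).
Proof.
by apply: linf_ext => x; rewrite enorm_vsubC.
Qed.

Lemma linf_tri (a b c : pt n -> pt n) : (0 < n)%N -> ~ null Om ->
  (linf Om (fun x => vsub (a x) (c x)) <=
   linf Om (fun x => vsub (a x) (b x)) + linf Om (fun x => vsub (b x) (c x)))%E.
Proof.
move=> n0 nOm.
have h1 := linf_ge0 (fun x => vsub (a x) (b x)) nOm.
have h2 := linf_ge0 (fun x => vsub (b x) (c x)) nOm.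
have ae1 := linf_ae (fun x => vsub (a x) (b x)) n0.
have ae2 := linf_ae (fun x => vsub (b x) (c x)) n0.
move: h1 h2 ae1 ae2 (@linf_aeP (fun x => vsub (a x) (b x))) (@linf_aeP (fun x => vsub (b x) (c x))).
case: (linf Om (fun x => vsub (a x) (b x))) => [l1| |] //; 
  case: (linf Om (fun x => vsub (b x) (c x))) => [l2| |] //; rewrite ?leey //.
move=> _ _ ae1 ae2 P1 P2.
rewrite -EFinD; apply: (linf_le (null_setU n0 ae1 ae2)) => x Ox nx.
have := P1 x Ox (fun h => nx (or_introl h)); rewrite lee_fin => q1.
have := P2 x Ox (fun h => nx (or_intror h)); rewrite lee_fin => q2.
apply: (le_trans (enorm_tri _ (b x) _)); exact: lerD.
Qed.

End Linf.

Section Strain.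
Variable R : realType.
Local Notation pt n := (n.-tuple R).
Variable n : nat.

Lemma strain_diff (y x : pt n) (v1 v2 : pt n -> pt n) :
  `|strain y x v1 - strain y x v2| <=
  (enorm (vsub (v1 y) (v2 y)) + enorm (vsub (v1 x) (v2 x))) / enorm (vsub y x).
Proof.
rewrite /strain -mulrBl -dot_vsubl.
set h := vsub y x; set A := vsub (v1 y) (v1 x); set B := vsub (v2 y) (v2 x).
have hB : enorm (vsub A B) <= enorm (vsub (v1 y) (v2 y)) + enorm (vsub (v1 x) (v2 x)).
  have -> : vsub A B = vadd (vsub (v1 y) (v2 y)) (vsub (v2 x) (v1 x)).
    by apply: eq_from_tnth => i; rewrite tnth_vadd !tnth_vsub; ring.
  by rewrite (enorm_vsubC (v1 x)) enorm_vadd.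
have [h0|hn0] := eqVneq (enorm h) 0.
  by rewrite h0 invr0 !mulr0 normr0.
have hp : 0 < enorm h by rewrite lt_def hn0 enorm_ge0.
rewrite dot_vscaler normrM normrM normfV (gtr0_norm hp).
apply: ler_wpM2r; first by rewrite invr_ge0 enorm_ge0.
apply: le_trans hB.
rewrite ler_pdivrMl //; apply: (le_trans (CS _ _)); rewrite mulrC.
done.
Qed.

Lemma strain_0 (y : pt n) (v : pt n -> pt n) : strain y y v = 0.
Proof.
rewrite /strain (_ : enorm (vsub y y) = 0) ?invr0 ?mulr0 //.
rewrite /enorm /dot big1 ?sqrtr0 // => i _; rewrite tnth_vsub subrr mulr0.
done.
Qed.

End Strain.

Section Phase.
Variable R : realType.
Variables (mu rL rC rF K : R) (gp : R -> R).
Hypotheses (mu0 : 0 < mu) (rL0 : 0 < rL) (K0 : 0 <= K)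
  (gpL : gp rL = mu * rL)
  (gpb : forall r, rL <= r -> 0 <= gp r /\ gp r <= mu * r)
  (gpK : forall r s, `|gp r - gp s| <= K * `|r - s|).

Definition Lp := K / (mu * rL) + rL^-1.

Lemma Lp_gt0 : 0 < Lp.
Proof. by rewrite /Lp ltr_wpDl ?invr_gt0 // divr_ge0 // mulr_ge0 // ltW. Qed.

Lemma divle (X p q : R) : 0 <= X -> 0 < p -> p <= q -> X / q <= X / p.
Proof.
move=> X0 p0 pq; apply: ler_wpM2l => //.
by rewrite lef_pV2 // posrE (lt_le_trans p0).
Qed.

Lemma core_lip a b : rL <= a -> rL <= b ->
  `|gp a / (mu * a) - gp b / (mu * b)| <= Lp * `|a - b|.
Proof.
move=> ra rb.
have a0 : 0 < a by apply: lt_le_trans ra.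
have b0 : 0 < b by apply: lt_le_trans rb.
have -> : gp a / (mu * a) - gp b / (mu * b) =
   (gp a - gp b) / (mu * a) + gp b * (b - a) / (mu * a * b).
  by field; rewrite ?gt_eqF ?mulr_gt0.
apply: (le_trans (ler_normD _ _)); rewrite /Lp [_ * `|a - b|]mulrDl.
apply: lerD.
  rewrite normrM normfV (gtr0_norm (mulr_gt0 mu0 a0)).
  apply: (@le_trans _ _ (K * `|a - b| / (mu * a))).
    by apply: ler_wpM2r; [rewrite invr_ge0 ltW ?mulr_gt0 | exact: gpK].
  rewrite [leRHS]mulrAC; apply: divle; first by rewrite mulr_ge0.
    by rewrite mulr_gt0.
  by rewrite ler_pM2l.
have [g0 gb] := gpb rb.
rewrite normrM normfV !normrM (ger0_norm g0) (gtr0_norm mu0) (gtr0_norm a0) (gtr0_norm b0).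
rewrite (distrC b a).
have H : gp b * `|a - b| / (mu * a * b) <= mu * b * `|a - b| / (mu * a * b).
  by apply: ler_wpM2r; [rewrite invr_ge0 ltW ?mulr_gt0 | apply: ler_wpM2r].
apply: (le_trans H).
have -> : mu * b * `|a - b| / (mu * a * b) = `|a - b| / a.
  by field; rewrite ?gt_eqF.
by rewrite [leRHS]mulrC; apply: divle.
Qed.

Lemma phase_lip a b :
  `|phase mu rL gp a%:E - phase mu rL gp b%:E| <= Lp * `|a - b|.
Proof.
have Lp0 := Lp_gt0.
wlog ab : a b / a <= b.
  move=> H; have [/H //|/ltW ba] := leP a b.
  by rewrite distrC (distrC a); apply: H.
rewrite /phase; case: ifPn => ar; case: ifPn => br.
- by rewrite subrr normr0 mulr_ge0 // ltW.
- have -> : (1 : R) = gp rL / (mu * rL) by rewrite gpL divff // gt_eqF // mulr_gt0.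
  rewrite -ltNge in br.
  apply: (le_trans (core_lip (lexx _) (ltW br))).
  apply: ler_wpM2l; first exact: ltW.
  rewrite distrC (distrC a) !ger0_norm ?subr_ge0; lra.
- exfalso; rewrite -ltNge in ar; lra.
- rewrite -!ltNge in ar br; apply: core_lip; exact: ltW.
Qed.

End Phase.

Section Sup.
Variable R : realType.
Variable F : rat -> R.
Definition Gs (t : R) : \bar R :=
  ereal_sup [set (F q)%:E | q in [set q : rat | 0 <= (ratr q : R) <= t]].

Lemma Gs_ge (q : rat) t : 0 <= (ratr q : R) <= t -> ((F q)%:E <= Gs t)%E.
Proof. by move=> qt; apply: ereal_sup_ubound; exists q. Qed.

Lemma Gs_ninfty t : 0 <= t -> Gs t <> -oo%E.
Proof.
move=> t0 E; have := @Gs_ge 0 t; rewrite rmorph0 lexx t0 E /= => /(_ isT).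
by rewrite leeNy_eq.
Qed.

Lemma Gs_mono a b : a <= b -> (Gs a <= Gs b)%E.
Proof.
move=> ab; apply: ereal_sup_le => _ [q /andP [q0 qa] <-]; exists q => //=.
by apply/andP; split => //; exact: le_trans qa ab.
Qed.

Lemma Gs_le (H : rat -> R) (c : R) t :
  (forall q, 0 <= (ratr q : R) <= t -> F q <= H q + c) ->
  (Gs t <= ereal_sup [set (H q)%:E | q in [set q : rat | (0 <= (ratr q : R) <= t)%R]] + c%:E)%E.
Proof.
move=> FH; apply/ereal_supP => _ [q qt <-].
apply: (@le_trans _ _ ((H q)%:E + c%:E)%E); first by rewrite -EFinD lee_fin FH.
apply: leeD2r; apply: ereal_sup_ubound; by exists q.
Qed.

Lemma Gs_cont (T t0 : R) : 0 <= t0 <= T ->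
  (forall e : R, 0 < e -> exists d : R, 0 < d /\ forall q s : rat,
     0 <= (ratr q : R) <= T -> 0 <= (ratr s : R) <= T ->
     `|ratr q - t0| < d -> `|ratr s - t0| < d -> `|F q - F s| <= e) ->
  forall e : R, 0 < e -> exists d : R, 0 < d /\ forall t, 0 <= t <= T ->
     `|t - t0| < d -> (Gs t <= Gs t0 + e%:E)%E /\ (Gs t0 <= Gs t + e%:E)%E.
Proof.
move=> /andP [t00 t0T] H e e0.
have [d [d0 Hd]] := H e e0.
exists d; split => // t /andP [t0' tT] td.
have key : forall a b, 0 <= a -> a <= b -> b <= T -> `|a - t0| < d -> `|b - t0| < d ->
    (Gs b <= Gs a + e%:E)%E.
  move=> a b a0 ab bT ad bd.
  have [q1 [q10 q1a q1d]] : exists q1 : rat, [/\ 0 <= (ratr q1 : R), ratr q1 <= a &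
      `|ratr q1 - t0| < d].
    have [aE|apos] := eqVneq a 0.
      by exists 0; rewrite rmorph0; split => //; rewrite -aE.
    have apos' : 0 < a by rewrite lt_def apos a0.
    have : Num.max 0 (t0 - d) < a.
      rewrite gt_max apos' /=; move: ad; rewrite ltr_norml; lra.
    move=> /rat_in_itvoo [q]; rewrite in_itv /= gt_max => /andP [/andP [q0 qd] qa].
    exists q; split; [exact: ltW | exact: ltW |].
    rewrite ltr_norml; move: ad; rewrite ltr_norml; lra.
  apply/ereal_supP => _ [s /andP [s0 sb] <-].
  have [sa|sa2] := leP (ratr s) a.
    apply: (@le_trans _ _ (Gs a)); first by apply: Gs_ge; rewrite s0 sa.
    by apply: leeDl; rewrite lee_fin ltW.
  apply: (@le_trans _ _ ((F q1)%:E + e%:E)%E); last first.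
    by apply: leeD2r; apply: Gs_ge; rewrite q10 q1a.
  rewrite -EFinD lee_fin.
  have : `|F s - F q1| <= e.
    apply: Hd.
    - by rewrite s0 (le_trans sb bT).
    - by rewrite q10 (le_trans q1a (le_trans ab bT)).
    - rewrite ltr_norml; move: ad bd; rewrite !ltr_norml; lra.
    - exact: q1d.
  rewrite ler_norml; lra.
have t0d : `|t0 - t0| < d by rewrite subrr normr0.
have [tt|tt] := leP t t0.
  split; first by apply: (le_trans (Gs_mono tt)); apply: leeDl; rewrite lee_fin ltW.
  exact: key.
split; first by apply: key => //; exact: ltW.
by apply: (le_trans (Gs_mono (ltW tt))); apply: leeDl; rewrite lee_fin ltW.
Qed.

End Sup.

Lemma within_ed (R : realType) (T : R) (f : R -> R) :
  (forall t0, 0 <= t0 <= T -> forall e, 0 < e -> exists d, 0 < d /\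
     forall t, 0 <= t <= T -> `|t - t0| < d -> `|f t - f t0| <= e) ->
  {within `[0, T], continuous f}.
Proof.
move=> H; apply/subspace_continuousP => x Ax.
apply/cvgrPdist_le => e e0.
have Ax' : 0 <= x <= T by move: Ax; rewrite /= in_itv.
have [d [d0 Hd]] := H x Ax' e e0.
rewrite near_withinE; apply/nbhs_ballP; exists d => //= t xt tA.
rewrite distrC; apply: Hd; first by move: tA; rewrite /= in_itv.
by rewrite distrC.
Qed.

Section Meas.
Variable R : realType.
Local Notation pt n := (n.-tuple R).

Lemma measurable_inv : measurable_fun [set: R] (@GRing.inv R).
Proof.
have -> : [set: R] = [set 0] `|` ~` [set 0] by rewrite setUv.
have c0 : closed [set (0:R)] by apply: compact_closed; [exact: Rhausdorff | exact: compact_set1].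
apply/measurable_funU => //.
  by apply: measurableC.
split; first exact: measurable_fun_set1.
apply: open_continuous_measurable_fun; first by rewrite openC.
move=> x; rewrite inE /= => x0; apply: inv_continuous; exact/eqP.
Qed.

Lemma lip_cont (f : R -> R) L : (forall a b, `|f a - f b| <= L * `|a - b|) ->
  continuous f.
Proof.
move=> H x; apply/cvgrPdist_le => e e0.
pose L' := Num.max L 1.
have L'0 : 0 < L' by rewrite lt_max ltr01 orbT.
apply/nbhs_ballP; exists (e / L') => /=; first by rewrite divr_gt0.
move=> y; rewrite /ball /= => xy.
apply: (le_trans (H x y)).
apply: (@le_trans _ _ (L' * `|x - y|)).
  by apply: ler_wpM2r => //; rewrite le_max lexx.
rewrite -ler_pdivlMl // mulrC; exact: ltW.
Qed.

Variable n : nat.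

Lemma strainE (y x : pt n) v : strain y x v =
  (\sum_i (tnth (v y) i - tnth (v x) i) * (tnth y i - tnth x i)) *
  (\sum_i (tnth y i - tnth x i) * (tnth y i - tnth x i))^-1.
Proof.
rewrite /strain dot_vscaler -mulrA mulrC -mulrA -invfM -expr2 enorm_sq /dot.
congr (_ * _^-1).
  by apply: eq_bigr => i _; rewrite !tnth_vsub.
by apply: eq_bigr => i _; rewrite !tnth_vsub.
Qed.

Lemma meas_strain (Om : set (pt n)) v : measurable Om -> measurable_fun Om v ->
  measurable (Om `*` Om) -> measurable_fun (Om `*` Om) (fun p => strain p.1 p.2 v).
Proof.
move=> mOm mv mD.
have mv1 : measurable_fun (Om `*` Om) (fun p => v p.1).
  apply: (measurable_comp mOm _ mv) => //; first by move=> _ [p [? ?] <-].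
  exact: measurable_funTS.
have mv2 : measurable_fun (Om `*` Om) (fun p => v p.2).
  apply: (measurable_comp mOm _ mv) => //; first by move=> _ [p [? ?] <-].
  exact: measurable_funTS.
have c1 i : measurable_fun (Om `*` Om) (fun p => tnth (v p.1) i).
  exact: (measurableT_comp (measurable_tnth i) mv1).
have c2 i : measurable_fun (Om `*` Om) (fun p => tnth (v p.2) i).
  exact: (measurableT_comp (measurable_tnth i) mv2).
have c3 i : measurable_fun (Om `*` Om) (fun p : pt n * pt n => tnth p.1 i).
  exact: (measurableT_comp (measurable_tnth i) (measurable_funTS measurable_fst)).
have c4 i : measurable_fun (Om `*` Om) (fun p : pt n * pt n => tnth p.2 i).
  exact: (measurableT_comp (measurable_tnth i) (measurable_funTS measurable_snd)).
rewrite (_ : (fun p => _) = (fun p : pt n * pt n =>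
  (\sum_i (tnth (v p.1) i - tnth (v p.2) i) * (tnth p.1 i - tnth p.2 i)) *
  (\sum_i (tnth p.1 i - tnth p.2 i) * (tnth p.1 i - tnth p.2 i))^-1)); last first.
  by apply: funext => p; rewrite strainE.
apply: measurable_funM.
  by apply: measurable_sum => i; apply: measurable_funM; apply: measurable_funB.
apply: (measurableT_comp measurable_inv).
by apply: measurable_sum => i; apply: measurable_funM; apply: measurable_funB.
Qed.

Lemma meas_mstrain (Om : set (pt n)) (u : R -> pt n -> pt n) t :
  measurable Om -> measurable (Om `*` Om) ->
  (forall q : rat, 0 <= (ratr q : R) <= t -> measurable_fun Om (u (ratr q))) ->
  measurable_fun (Om `*` Om) (fun p => mstrain u t p.1 p.2).
Proof.
move=> mOm mD mu.
pose f k : pt n * pt n -> \bar R := match @pickle_inv rat k with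
  | Some q => if (0 <= (ratr q : R) <= t) then (fun p => (strain p.1 p.2 (u (ratr q)))%:E) else (fun=> -oo%E)
  | None => fun=> -oo%E end.
have mf k : measurable_fun (Om `*` Om) (f k).
  rewrite /f; case: (pickle_inv k) => [q|]; last exact: measurable_cst.
  case: ifPn => qt; last exact: measurable_cst.
  by apply/measurable_EFinP; apply: meas_strain => //; apply: mu.
rewrite (_ : (fun p => _) = (fun p => esups (fun k => f k p) 0)).
  exact: measurable_fun_esups.
apply: funext => p; apply/eqP; rewrite eq_le; apply/andP; split.
  apply/ereal_supP => _ [q qt <-]; apply: ereal_sup_ubound.
  exists (pickle q) => //; rewrite /f pickleK_inv.
  by move: qt => /= ->.
apply/ereal_supP => _ [k _ <-]; rewrite /f.
case: (pickle_inv k) => [q|]; last by rewrite leNye.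
case: ifPn => qt; last by rewrite leNye.
by apply: ereal_sup_ubound; exists q.
Qed.

Lemma meas_enorm (D : set (pt n * pt n)) :
  measurable_fun D (fun p : pt n * pt n => enorm (vsub p.1 p.2)).
Proof.
rewrite (_ : (fun p => _) = (fun p : pt n * pt n => Num.sqrt
  (\sum_i (tnth p.1 i - tnth p.2 i) * (tnth p.1 i - tnth p.2 i)))); last first.
  by apply: funext => p; rewrite /enorm /dot; congr Num.sqrt; apply: eq_bigr => i _; rewrite tnth_vsub.
apply: (measurableT_comp (continuous_measurable_fun (@sqrt_continuous R))).
apply: measurable_sum => i; apply: measurable_funM; apply: measurable_funB.
- exact: (measurableT_comp (measurable_tnth i) (measurable_funTS measurable_fst)).
- exact: (measurableT_comp (measurable_tnth i) (measurable_funTS measurable_snd)).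
- exact: (measurableT_comp (measurable_tnth i) (measurable_funTS measurable_fst)).
- exact: (measurableT_comp (measurable_tnth i) (measurable_funTS measurable_snd)).
Qed.

Lemma meas_gamma (Om : set (pt n)) (u : R -> pt n -> pt n) t (Lc mu rL : R) gp :
  0 <= rL -> continuous (fun r => phase mu rL gp r%:E) ->
  measurable Om -> measurable (Om `*` Om) ->
  (forall q : rat, 0 <= (ratr q : R) <= t -> measurable_fun Om (u (ratr q))) ->
  measurable_fun (Om `*` Om) (fun p => gamma Lc mu rL gp u p.1 p.2 t).
Proof.
move=> rL0 phc mOm mD mu'.
have mr : measurable_fun (Om `*` Om) (fun p => rstar Lc u t p.1 p.2).
  rewrite /rstar; apply: emeasurable_funM; last exact: meas_mstrain.
  apply/measurable_EFinP.
  apply: (measurableT_comp (continuous_measurable_fun (@sqrt_continuous R))).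
  by apply: measurable_funM; [exact: meas_enorm | exact: measurable_cst].
rewrite (_ : (fun p => _) = (fun p => if rstar Lc u t p.1 p.2 == +oo%E then 0
   else phase mu rL gp (fine (rstar Lc u t p.1 p.2))%:E)); last first.
  apply: funext => p; rewrite /gamma; case: (rstar Lc u t p.1 p.2) => [r| |] //=.
  by rewrite rL0.
apply: measurable_fun_if => //; try exact: (measurable_fun_eqe mr (measurable_cst _)).
- apply: (measurableT_comp (continuous_measurable_fun phc)).
  apply: (measurableT_comp (fine_measurable measurableT)).
  apply: measurable_funS mr => //; exact: subIsetl.
Qed.

End Meas.

Section Fam.
Variable R : realType.
Local Notation pt n := (n.-tuple R).
Variable n : nat.
Variable Om : set (pt n).

Definition famN (I : countType) (f : I -> pt n -> pt n) : set (pt n) :=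
  \bigcup_k match @pickle_inv I k with
    | Some i => Om `&` [set y | (linf Om (f i) < (enorm (f i y))%:E)%E]
    | None => set0 end.

Lemma famN_null (I : countType) (f : I -> pt n -> pt n) : (0 < n)%N -> null (famN f).
Proof.
move=> n0; apply: null_bigcup => // k.
case: (pickle_inv k) => [i|]; last exact: null0.
exact: linf_ae.
Qed.

Lemma famN_bound (I : countType) (f : I -> pt n -> pt n) y : Om y -> ~ famN f y ->
  forall i, ((enorm (f i y))%:E <= linf Om (f i))%E.
Proof.
move=> Oy nN i; apply: linf_aeP => // H; apply: nN.
by exists (pickle i) => //; rewrite pickleK_inv.
Qed.

End Fam.

Section Part2.
Variable R : realType.
Local Notation pt n := (n.-tuple R).

Lemma part2 (d : nat) (Om : set (pt d)) (eps Lc mu rL K T : R) (gp : R -> R)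
  (u w : R -> pt d -> pt d) :
  (0 < d)%N -> ~ null Om -> 0 < eps -> 0 < Lc -> 0 < mu -> 0 < rL -> 0 <= K ->
  gp rL = mu * rL ->
  (forall r, rL <= r -> 0 <= gp r /\ gp r <= mu * r) ->
  (forall r s, `|gp r - gp s| <= K * `|r - s|) -> 0 <= T ->
  ae2 [set p | Om p.1 /\ Om p.2 /\ enorm (vsub p.1 p.2) < eps]
       (fun y x => forall t, 0 <= t <= T ->
          ((`|gamma Lc mu rL gp u y x t - gamma Lc mu rL gp w y x t|)%:E
            <= normCX Om T u w * ((2 * Lp mu rL K * Num.sqrt (eps / Lc)) / enorm (vsub y x))%:E)%E).
Proof.
move=> d0 nOm eps0 Lc0 mu0 rL0 K0 gpL gpb gpK T0.
have Lp0 := Lp_gt0 mu0 rL0 K0.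
have phl := phase_lip mu0 rL0 K0 gpL gpb gpK.
set S := Num.sqrt (eps / Lc).
have S0 : 0 < S by rewrite sqrtr_gt0 divr_gt0.
pose f (q : rat) := fun z => vsub (u (ratr q) z) (w (ratr q) z).
exists [set p | famN Om f p.1 \/ famN Om f p.2]; split.
  by apply: null2_or => //; exact: famN_null.
move=> y x [Oy [Ox hlt]] nN t /andP [t0 tT].
have By := famN_bound Oy (fun h => nN (or_introl h)).
have Bx := famN_bound Ox (fun h => nN (or_intror h)).
set D := normCX Om T u w.
have DB q : 0 <= (ratr q : R) <= T -> (linf Om (f q) <= D)%E.
  move=> qT; apply: ereal_sup_ubound; exists (ratr q) => //.
have D0 : (0 <= D)%E.
  apply: le_trans (DB 0 _); first exact: linf_ge0.
  by rewrite rmorph0 lexx T0.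
set h := enorm (vsub y x).
have [h0|hn0] := eqVneq h 0.
  rewrite /gamma /rstar -/h h0 mul0r sqrtr0 !mul0e subrr normr0 invr0 mulr0 mule0.
  done.
have hp : 0 < h by rewrite lt_def hn0 enorm_ge0.
set c := Num.sqrt (h / Lc).
have cp : 0 < c by rewrite sqrtr_gt0 divr_gt0.
have cS : c <= S.
  rewrite ler_sqrt; last by rewrite divr_ge0 // ltW.
  by rewrite ler_pM2r ?invr_gt0 // ltW.
have gE v : gamma Lc mu rL gp v y x t =
    phase mu rL gp (c%:E * Gs (fun q => strain y x (v (ratr q))) t)%E by [].
rewrite !gE.
have C0 : 0 < 2 * Lp mu rL K * S / h by rewrite !mulr_gt0 ?invr_gt0.
move: D0; case ED: D => [D'| |] // D0.
  2: by rewrite mulyr gtr0_sg // mul1e leey.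
rewrite lee_fin in D0.
have Fq q : 0 <= (ratr q : R) <= T ->
    `|strain y x (u (ratr q)) - strain y x (w (ratr q))| <= (D' + D') / h.
  move=> qT; apply: (le_trans (strain_diff _ _ _ _)).
  apply: ler_wpM2r; first by rewrite invr_ge0 ltW.
  have := DB q qT; rewrite ED => DBq.
  apply: lerD.
    by rewrite -lee_fin; apply: le_trans (By q) DBq.
  by rewrite -lee_fin; apply: le_trans (Bx q) DBq.
set Fu := fun q => strain y x (u (ratr q)).
set Fw := fun q => strain y x (w (ratr q)).
have le1 : (Gs Fu t <= Gs Fw t + ((D' + D') / h)%:E)%E.
  apply: Gs_le => q /andP [q0 qt].
  have := Fq q; rewrite q0 (le_trans qt tT) => /(_ isT).
  rewrite ler_norml /Fu /Fw; lra.
have le2 : (Gs Fw t <= Gs Fu t + ((D' + D') / h)%:E)%E.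
  apply: Gs_le => q /andP [q0 qt].
  have := Fq q; rewrite q0 (le_trans qt tT) => /(_ isT).
  rewrite ler_norml /Fu /Fw; lra.
have nu := Gs_ninfty (F:=Fu) t0; have nw := Gs_ninfty (F:=Fw) t0.
have RHS0 : 0 <= D' * (2 * Lp mu rL K * S / h) by rewrite mulr_ge0 // ltW.
move: le1 le2 nu nw; case: (Gs Fu t) => [gu| |]; case: (Gs Fw t) => [gw| |] //.
- rewrite -!EFinD !lee_fin => l1 l2 _ _; rewrite -!EFinM.
  apply: (le_trans (phl _ _)).
  have dg : `|gu - gw| <= (D' + D') / h by rewrite ler_norml; lra.
  rewrite -mulrBr normrM (gtr0_norm cp).
  have -> : D' * (2 * Lp mu rL K * S / h) = Lp mu rL K * (S * ((D' + D') / h)).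
    by field; rewrite gt_eqF.
  apply: ler_wpM2l; first exact: ltW.
  by apply: ler_pM => //; exact: ltW.
- by move=> _ _ _ _; rewrite !gt0_muley ?lte_fin // subrr normr0 -EFinM lee_fin.
Qed.

End Part2.

Section Part1.
Variable R : realType.
Local Notation pt n := (n.-tuple R).

Lemma part1b (d : nat) (Om : set (pt d)) (Lc mu rL K T : R) (gp : R -> R)
  (u : R -> pt d -> pt d) :
  (0 < d)%N -> ~ null Om -> 0 < Lc -> 0 < mu -> 0 < rL -> 0 <= K ->
  gp rL = mu * rL ->
  (forall r, rL <= r -> 0 <= gp r /\ gp r <= mu * r) ->
  (forall r s, `|gp r - gp s| <= K * `|r - s|) ->
  (forall t, 0 <= t <= T -> forall e : R, 0 < e -> exists del : R, 0 < del /\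
     forall s, 0 <= s <= T -> `|s - t| < del ->
       (linf Om (fun x => vsub (u s x) (u t x)) <= e%:E)%E) ->
  ae2 (Om `*` Om) (fun y x =>
        {within `[0, T], continuous (fun t => gamma Lc mu rL gp u y x t)}).
Proof.
move=> d0 nOm Lc0 mu0 rL0 K0 gpL gpb gpK ucont.
have Lp0 := Lp_gt0 mu0 rL0 K0.
have phl := phase_lip mu0 rL0 K0 gpL gpb gpK.
pose f (qs : rat * rat) := fun z => vsub (u (ratr qs.1) z) (u (ratr qs.2) z).
exists [set p | famN Om f p.1 \/ famN Om f p.2]; split.
  by apply: null2_or => //; exact: famN_null.
move=> y x [Oy Ox] nN.
have By := famN_bound Oy (fun h => nN (or_introl h)).
have Bx := famN_bound Ox (fun h => nN (or_intror h)).
apply: within_ed => t0 /andP [t00 t0T] e e0.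
set h := enorm (vsub y x).
set F := fun q : rat => strain y x (u (ratr q)).
set c := Num.sqrt (h / Lc).
have gE t : gamma Lc mu rL gp u y x t = phase mu rL gp (c%:E * Gs F t)%E by [].
have [h0|hn0] := eqVneq h 0.
  exists 1; split => // t _ _; rewrite !gE /c h0 mul0r sqrtr0 !mul0e subrr normr0.
  exact: ltW.
have hp : 0 < h by rewrite lt_def hn0 enorm_ge0.
have cp : 0 < c by rewrite sqrtr_gt0 divr_gt0.
have osc : forall e1 : R, 0 < e1 -> exists d1 : R, 0 < d1 /\ forall q s : rat,
     0 <= (ratr q : R) <= T -> 0 <= (ratr s : R) <= T ->
     `|ratr q - t0| < d1 -> `|ratr s - t0| < d1 -> `|F q - F s| <= e1.
  move=> e1 e10.
  have [del [del0 Hdel]] := ucont t0 (andb_true_intro (conj t00 t0T)) (e1 * h / 4)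
    (divr_gt0 (mulr_gt0 e10 hp) (ltr0Sn _ 3)).
  exists del; split => // q s qT sT qd sd.
  have L1 : (linf Om (f (q, s)) <= (e1 * h / 4 + e1 * h / 4)%:E)%E.
    apply: (le_trans (linf_tri (u (ratr q)) (u t0) (u (ratr s)) d0 nOm)).
    rewrite EFinD; apply: leeD; first exact: Hdel.
    by rewrite linf_sym; apply: Hdel.
  have ey := le_trans (By (q, s)) L1.
  have ex := le_trans (Bx (q, s)) L1.
  rewrite lee_fin in ey ex.
  apply: (le_trans (strain_diff _ _ _ _)).
  rewrite ler_pdivrMr //.
  have : enorm (vsub (u (ratr q) y) (u (ratr s) y)) + enorm (vsub (u (ratr q) x) (u (ratr s) x)) <= e1 * h.
    move: ey ex; rewrite /f /= ?lee_fin; set E := e1 * h => ey ex.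
    lra.
  done.
have ec : 0 < e / (Lp mu rL K * c) by rewrite divr_gt0 // mulr_gt0.
have [d2 [d20 Hd2]] := Gs_cont (andb_true_intro (conj t00 t0T)) osc ec.
exists d2; split => // t /andP [t0' tT] td.
have [G1 G2] := Hd2 t (andb_true_intro (conj t0' tT)) td.
rewrite !gE.
have n0 := Gs_ninfty (F:=F) t00; have nt := Gs_ninfty (F:=F) t0'.
move: G1 G2 n0 nt; case: (Gs F t) => [g| |]; case: (Gs F t0) => [g0| |] //.
- rewrite -!EFinD !lee_fin => G1 G2 _ _; rewrite -!EFinM.
  apply: (le_trans (phl _ _)).
  have dg : `|g - g0| <= e / (Lp mu rL K * c) by rewrite ler_norml; lra.
  rewrite -mulrBr normrM (gtr0_norm cp).
  have -> : e = Lp mu rL K * (c * (e / (Lp mu rL K * c))).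
    by field; rewrite !gt_eqF.
  apply: ler_wpM2l; first exact: ltW.
  by apply: ler_wpM2l => //; exact: ltW.
- by move=> _ _ _ _; rewrite !gt0_muley ?lte_fin // subrr normr0 ltW.
Qed.

End Part1.

Theorem mainTheorem2 (R : realType) (d : nat) (Omega : set (pt R d))
  (eps Lc mu rL rC rF : R) (gp : R -> R) (T : R) :
  (d = 2%N \/ d = 3%N) -> bounded_domain Omega ->
  0 < eps -> 0 < Lc -> 0 < mu -> envelope mu rL rC rF gp -> 0 < T ->
  (forall u : R -> pt R d -> pt R d, inCX Omega T u ->
     (forall t, 0 <= t <= T ->
        measurable_fun (Omega `*` Omega)
          (fun p : pt R d * pt R d => gamma Lc mu rL gp u p.1 p.2 t)) /\
     ae2 (Omega `*` Omega) (fun y x =>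
        {within `[0, T], continuous (fun t => gamma Lc mu rL gp u y x t)})) /\
  (exists C : R, forall u w : R -> pt R d -> pt R d,
     inCX Omega T u -> inCX Omega T w ->
     ae2 [set p | Omega p.1 /\ Omega p.2 /\ enorm (vsub p.1 p.2) < eps]
       (fun y x => forall t, 0 <= t <= T ->
          ((`|gamma Lc mu rL gp u y x t - gamma Lc mu rL gp w y x t|)%:E
            <= normCX Omega T u w * (C / enorm (vsub y x))%:E)%E)).
Proof.
move=> hd bd eps0 Lc0 mu0 env T0.
have d0 : (0 < d)%N by case: hd => ->.
case: env => [[rL0 [rLC rCF]] [gpLe [gpF [gpb [_ [_ [K HK]]]]]]].
pose K' := Num.max K 0.
have K0 : 0 <= K' by rewrite le_max lexx orbT.
have gpK : forall r s, `|gp r - gp s| <= K' * `|r - s|.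
  move=> r s; apply: (le_trans (HK r s)); apply: ler_wpM2r => //.
  by rewrite le_max lexx.
have gpL : gp rL = mu * rL by apply: gpLe.
have phc : continuous (fun r => phase mu rL gp r%:E).
  exact: (lip_cont (phase_lip mu0 rL0 K0 gpL gpb gpK)).
have triv : null Omega -> forall A (P : pt R d -> pt R d -> Prop),
    A `<=` [set p | Omega p.1] -> ae2 A P.
  move=> nO A P AO; exists [set p | Omega p.1 \/ Omega p.2]; split.
    exact: null2_or.
  by move=> y x /AO /= Oy H; exfalso; apply: H; left.
split.
  move=> u [uX ucont]; split.
    move=> t /andP [t0 tT] mD.
    case: bd => [[x0 Ox0] _ _ _].
    have mOm : measurable Omega.
      rewrite (_ : Omega = xsection (Omega `*` Omega) x0); first exact: measurable_xsection.
      by apply/seteqP; split => z; rewrite /xsection /= inE /=; [move=> Oz | case].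
    have mu' : forall q : rat, 0 <= (ratr q : R) <= t -> measurable_fun Omega (u (ratr q)).
      move=> q /andP [q0 qt].
      by case: (uX (ratr q) _) => //; rewrite q0 (le_trans qt tT).
    exact: (meas_gamma Lc (ltW rL0) phc mOm mD mu' mD).
  case: (pselect (null Omega)) => nO.
    by apply: triv => // p [].
  exact: (part1b d0 nO Lc0 mu0 rL0 K0 gpL gpb gpK ucont).
exists (2 * Lp mu rL K' * Num.sqrt (eps / Lc)) => u w _ _.
case: (pselect (null Omega)) => nO.
  by apply: triv => // p [].
exact: (part2 u w d0 nO eps0 Lc0 mu0 rL0 K0 gpL gpb gpK (ltW T0)).
Qed.
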